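(* For fixed $0<q<1$, $p=1-q$, integers $r\ge1$ and $n\ge r$, \[ E^{(r)}_n=(-1)^r\Big(\frac pq\Big)^{r-1}\sum_{k=r}^n\binom nk(-1)^k\frac{\phi_r(k)}{(1-q^k)^2}, \] where, with $Q=1/q$, \[ \phi_r(k)=\sum_{0<l_1<\dots<l_{r-1}<k}\frac{1}{Q^{l_1}-1}\cdots\frac{1}{Q^{l_{r-1}}-1}\,\big(q^{l_{r-1}}-q^k\big), \] with the convention that for $r=1$ the sum consists of the single empty-index term with $l_0=0$, i.e. $\phi_1(k)=1-q^k$. In particular \[ E^{(1)}_n=\sum_{k=1}^n\binom nk(-1)^{k-1}\frac{1}{1-q^k}. \]
   Context: Words $a_1\dots a_n$ have independent letters with $\mathbb P\{a_i=k\}=pq^{k-1}$, $k\ge1$. An index $i$ is a left-to-right maximum if $a_i>a_j$ for all $j<i$. Left-to-right maxima are counted from the right (the last one is the 1st). $E^{(r)}_n=\mathbb E[V\cdot\mathbf 1\{\text{at least } r \text{ left-to-right maxima}\}]$ where $V$ is the value of the $r$th left-to-right maximum from the right. *)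

(* Defs.v *)
From HB Require Import structures.
From mathcomp Require Import all_boot all_order all_algebra.
From mathcomp Require Import all_classical all_reals all_analysis.
Set Implicit Arguments. Unset Strict Implicit. Unset Printing Implicit Defensive.
Import Order.TTheory GRing.Theory Num.Theory.
Local Open Scope ring_scope.

(* A word is a sequence of positive letters (seq nat). *)
Definition is_ltrmax (s : seq nat) (i : nat) : bool :=
  all (fun j => (nth 0 s j < nth 0 s i)%N) (iota 0 i).

Definition ltrmax_vals (s : seq nat) : seq nat :=
  [seq nth 0 s i | i <- iota 0 (size s) & is_ltrmax s i].

(* V * 1{at least r left-to-right maxima}, where V is the value of the r-th
   left-to-right maximum counted from the right (the last one is the 1st). *)
Definition Vr (r : nat) (s : seq nat) : nat :=
  if (r <= size (ltrmax_vals s))%N then nth 0 (rev (ltrmax_vals s)) r.-1 else 0%N.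

(* The word with letters f i + 1 (so letters range over 1..M). *)
Definition word_of (n M : nat) (f : {ffun 'I_n -> 'I_M}) : seq nat :=
  [seq (f i).+1 | i <- enum 'I_n].

(* Probability of that word: prod_i p q^(a_i - 1). *)
Definition word_prob (R : realType) (q : R) (n M : nat) (f : {ffun 'I_n -> 'I_M}) : R :=
  \prod_(i < n) ((1 - q) * q ^+ (f i)).

(* Truncated expectation: restricted to words with all letters <= M.
   Since the summand is nonnegative, E_n^{(r)} is the limit as M -> oo. *)
Definition Etrunc (R : realType) (q : R) (r n M : nat) : R :=
  \sum_(f : {ffun 'I_n -> 'I_M}) word_prob q f * (Vr r (word_of f))%:R.

(* phi_r(k) = sum over 0 < l_1 < ... < l_{r-1} < k of
   prod_j 1/(Q^{l_j} - 1) * (q^{l_{r-1}} - q^k), with Q = 1/q and l_0 = 0;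
   index sets are represented as subsets S of {1,...,k-1} with #|S| = r-1. *)
Definition phi (R : realType) (q : R) (r k : nat) : R :=
  \sum_(S : {set 'I_k} | (#|S| == r.-1)%N && ((0%N : nat) \notin [seq val l | l in S]))
     (\prod_(l in S) (1 / (q^-1 ^+ (val l) - 1))) *
     (q ^+ (\max_(l in S) val l) - q ^+ k).

(* Main.v *)
Require Import Defs.
From HB Require Import structures.
From mathcomp Require Import all_boot all_order all_algebra.
From mathcomp Require Import all_classical all_reals all_analysis.
Import Order.TTheory GRing.Theory Num.Theory.
Set Implicit Arguments. Unset Strict Implicit. Unset Printing Implicit Defensive.
Definition mx (w : seq nat) : nat := \max_(i <- w) i.

Lemma mx_rcons w a : mx (rcons w a) = maxn (mx w) a.
Proof. by rewrite /mx big_rcons. Qed.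

Lemma mx_cons x w : mx (x :: w) = maxn x (mx w).
Proof. by rewrite /mx big_cons. Qed.

Lemma all_lt_mx w a : (0 < a)%N ->
  all (fun j => nth 0%N w j < a)%N (iota 0 (size w)) = (mx w < a)%N.
Proof.
move=> a0.
have -> : all (fun j => nth 0%N w j < a)%N (iota 0 (size w)) =
          all (fun x => x < a)%N (map (nth 0%N w) (iota 0 (size w))) by rewrite all_map.
rewrite -/(mkseq _ _) mkseq_nth.
elim: w => [|x w IH] /=; first by rewrite /mx big_nil.
by rewrite IH mx_cons gtn_max.
Qed.

Lemma vals_rcons w a : (0 < a)%N ->
  ltrmax_vals (rcons w a) = ltrmax_vals w ++ (if (mx w < a)%N then [:: a] else [::]).
Proof.
move=> a0.
rewrite /ltrmax_vals size_rcons -addn1 iotaD filter_cat map_cat add0n.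
congr (_ ++ _).
  have -> : [seq i <- iota 0 (size w) | is_ltrmax (rcons w a) i] =
            [seq i <- iota 0 (size w) | is_ltrmax w i].
    apply: eq_in_filter => i; rewrite mem_iota add0n => /= Hi.
    rewrite /is_ltrmax; apply: eq_in_all => j; rewrite mem_iota add0n => /= Hj.
    by rewrite !nth_rcons Hi (ltn_trans Hj Hi).
  apply/eq_in_map => i; rewrite mem_filter mem_iota add0n => /andP[_ /andP[_ Hi]].
  by rewrite /= nth_rcons Hi.
rewrite /= {1}/is_ltrmax nth_rcons ltnn eqxx.
have -> : all (fun j => nth 0%N (rcons w a) j < a)%N (iota 0 (size w)) =
          all (fun j => nth 0%N w j < a)%N (iota 0 (size w)).
  apply: eq_in_all => j; rewrite mem_iota add0n => /= Hj.
  by rewrite nth_rcons Hj.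
rewrite all_lt_mx //.
by case: ifP => //= _; rewrite nth_rcons ltnn eqxx.
Qed.

Lemma Vr_rcons_le r w a : (0 < a)%N -> (a <= mx w)%N -> Vr r (rcons w a) = Vr r w.
Proof.
move=> a0 le; have H : (mx w < a)%N = false by rewrite ltnNge le.
by rewrite /Vr vals_rcons // H cats0.
Qed.

Lemma Vr_rcons_gt1 w a : (0 < a)%N -> (mx w < a)%N -> Vr 1 (rcons w a) = a.
Proof.
move=> a0 lt; rewrite /Vr vals_rcons // lt cats1 size_rcons rev_rcons /=.
done.
Qed.

Lemma Vr_rcons_gtS r w a : (0 < a)%N -> (mx w < a)%N ->
  Vr r.+2 (rcons w a) = Vr r.+1 w.
Proof.
move=> a0 lt; rewrite /Vr vals_rcons // lt cats1 size_rcons rev_rcons /=.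
by rewrite ltnS.
Qed.

Lemma Vr1_mx w : all (fun x => 0 < x)%N w -> Vr 1 w = mx w.
Proof.
elim/last_ind: w => [|w a IH]; first by rewrite /Vr /ltrmax_vals /= /mx big_nil.
rewrite all_rcons => /andP[a0 /IH {}IH].
rewrite mx_rcons.
case: (leqP a (mx w)) => H.
  by rewrite Vr_rcons_le // IH; apply/esym/maxn_idPl.
by rewrite Vr_rcons_gt1 //; apply/esym/maxn_idPr/ltnW.
Qed.

Lemma mx_le w b : all (fun x => x <= b)%N w -> (mx w <= b)%N.
Proof.
elim: w => [|x w IH] /=; first by rewrite /mx big_nil.
by move=> /andP[h1 h2]; rewrite mx_cons geq_max h1 IH.
Qed.

Local Open Scope ring_scope.
Lemma widen_lift n (i : 'I_n) : widen_ord (leqnSn n) i = lift ord_max i.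
Proof. by apply: val_inj => /=; rewrite /bump leqNgt ltn_ord. Qed.

Definition extf n M (g : {ffun 'I_n -> 'I_M}) (a : 'I_M) : {ffun 'I_n.+1 -> 'I_M} :=
  [ffun i => if unlift ord_max i is Some j then g j else a].

Lemma sum_ffunS (V : nmodType) n M (F : {ffun 'I_n.+1 -> 'I_M} -> V) :
  \sum_(f : {ffun 'I_n.+1 -> 'I_M}) F f =
  \sum_(g : {ffun 'I_n -> 'I_M}) \sum_(a : 'I_M) F (extf g a).
Proof.
rewrite pair_big /=.
rewrite (reindex (fun p : {ffun 'I_n -> 'I_M} * 'I_M => extf p.1 p.2)) //=.
exists (fun f => ([ffun j => f (lift ord_max j)], f ord_max)).
  move=> [g a] _ /=; congr (_, _).
    by apply/ffunP => j; rewrite !ffunE liftK.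
  by rewrite ffunE unlift_none.
move=> f _ /=; apply/ffunP => i; rewrite ffunE.
by case: unliftP => [j ->|->]; rewrite ?ffunE.
Qed.

Lemma word_of_extf n M (g : {ffun 'I_n -> 'I_M}) a :
  word_of (extf g a) = rcons (word_of g) (a : nat).+1.
Proof.
rewrite /word_of enum_ordSr map_rcons -map_comp ffunE unlift_none.
congr rcons; apply: eq_map => i /=.
by rewrite ffunE widen_lift liftK.
Qed.

Lemma word_prob_extf (R : realType) (q : R) n M (g : {ffun 'I_n -> 'I_M}) a :
  word_prob q (extf g a) = word_prob q g * ((1 - q) * q ^+ a).
Proof.
rewrite /word_prob big_ord_recr /= ffunE unlift_none.
congr (_ * _); apply: eq_bigr => i _.
by rewrite ffunE widen_lift liftK.
Qed.

Lemma word_of_pos n M (g : {ffun 'I_n -> 'I_M}) : all (fun x => 0 < x)%N (word_of g).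
Proof. by rewrite /word_of all_map; apply/allP. Qed.

Lemma word_of_le n M (g : {ffun 'I_n -> 'I_M}) : (mx (word_of g) <= M)%N.
Proof. by apply: mx_le; rewrite /word_of all_map; apply/allP => i _ /=. Qed.

Lemma sum_ffun0 (V : nmodType) M (F : {ffun 'I_0 -> 'I_M} -> V) :
  \sum_(f : {ffun 'I_0 -> 'I_M}) F f = F (ffun0 (card_ord 0)).
Proof.
rewrite (big_pred1 (ffun0 (card_ord 0))) //.
by move=> f /=; apply/esym/eqP/ffunP => -[].
Qed.

Lemma word_of0 M (f : {ffun 'I_0 -> 'I_M}) : word_of f = [::].
Proof. by rewrite /word_of; apply/size0nil; rewrite size_map size_enum_ord. Qed.
From mathcomp Require Import ring lra.
Section Rec.
Variable (R : realType) (q : R).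

Definition wt r w : R := if r is 0 then 1 else (Vr r w)%:R.
Definition wt' r w (a : nat) : R :=
  if r is r'.+1 then (if r' is 0 then (a.+1)%:R else wt r' w) else 1.

Definition Kt n M r (s : R) : R :=
  \sum_(f : {ffun 'I_n -> 'I_M}) word_prob q f * wt r (word_of f) * s ^+ mx (word_of f).

Lemma Kt_split n M r s : Kt n.+1 M r s =
  \sum_(g : {ffun 'I_n -> 'I_M}) word_prob q g *
    \sum_(a < M) ((1 - q) * q ^+ a * wt r (rcons (word_of g) a.+1) *
                   s ^+ mx (rcons (word_of g) a.+1)).
Proof.
rewrite /Kt sum_ffunS; apply: eq_bigr => g _; rewrite mulr_sumr.
apply: eq_bigr => a _; rewrite word_of_extf word_prob_extf.
by rewrite !mulrA.
Qed.

Lemma tele_nat (u : nat -> R) m M : (m <= M)%N ->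
  \sum_(m <= a < M) (u a - u a.+1) = u m - u M.
Proof.
move=> h; under eq_bigr do rewrite -opprB.
by rewrite sumrN telescope_sumr // opprB.
Qed.

Lemma inner_split r w M s : all (fun x => 0 < x)%N w -> (mx w <= M)%N ->
  \sum_(a < M) ((1 - q) * q ^+ a * wt r (rcons w a.+1) * s ^+ mx (rcons w a.+1)) =
  wt r w * (s ^+ mx w - (q * s) ^+ mx w) +
  \sum_(mx w <= a < M) ((1 - q) * q ^+ a * s ^+ a.+1 * wt' r w a).
Proof.
move=> pos hm.
rewrite -(big_mkord (fun _ => true) (fun a => (1 - q) * q ^+ a * wt r (rcons w a.+1) * s ^+ mx (rcons w a.+1)))
  (big_cat_nat (leq0n (mx w)) hm) /=.
congr (_ + _).
  rewrite (eq_big_nat _ _ (F2 := fun a => (q ^+ a - q ^+ a.+1) * (wt r w * s ^+ mx w))); last first.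
    move=> a /andP[_ ha].
    rewrite mx_rcons (maxn_idPl ha).
    have -> : wt r (rcons w a.+1) = wt r w.
      by case: r => //= r; rewrite Vr_rcons_le.
    by rewrite exprS; ring.
  by rewrite -mulr_suml tele_nat // expr0 exprMn; ring.
apply: eq_big_nat => a /andP[ha _].
rewrite mx_rcons (maxn_idPr (leqW ha)).
have -> : wt r (rcons w a.+1) = wt' r w a.
  case: r => [|[|r]] //=.
    by rewrite Vr_rcons_gt1.
  by rewrite Vr_rcons_gtS.
by ring.
Qed.

Lemma S0 s m M : q * s != 1 -> (m <= M)%N ->
  \sum_(m <= a < M) ((1 - q) * q ^+ a * s ^+ a.+1 * 1) =
  (1 - q) * s / (1 - q * s) * ((q * s) ^+ m - (q * s) ^+ M).
Proof.
move=> hy hm.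
have hy' : 1 - q * s != 0 by rewrite subr_eq0 eq_sym.
rewrite (eq_big_nat _ _ (F2 := fun a => (1 - q) * s / (1 - q * s) * ((q * s) ^+ a - (q * s) ^+ a.+1))).
  by rewrite -mulr_sumr tele_nat.
move=> a _; rewrite !exprS !exprMn.
by field.
Qed.

Definition Tf (y : R) (a : nat) : R := y ^+ a / (1 - y) ^+ 2 + a%:R * y ^+ a / (1 - y).

Lemma S1 s m M : q * s != 1 -> (m <= M)%N ->
  \sum_(m <= a < M) ((1 - q) * q ^+ a * s ^+ a.+1 * (a.+1)%:R) =
  (1 - q) * s * (Tf (q * s) m - Tf (q * s) M).
Proof.
move=> hy hm.
have hy' : 1 - q * s != 0 by rewrite subr_eq0 eq_sym.
rewrite (eq_big_nat _ _ (F2 := fun a => (1 - q) * s * (Tf (q * s) a - Tf (q * s) a.+1))).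
  by rewrite -mulr_sumr tele_nat.
move=> a _; rewrite /Tf !exprS !exprMn -natr1.
by field.
Qed.

Lemma comb1 (I : finType) (A B C D : I -> R) c d :
  \sum_i A i - \sum_i B i + c * (\sum_i C i - d * \sum_i D i) =
  \sum_i (A i - B i + c * (C i - d * D i)).
Proof. by rewrite big_split /= sumrB -mulr_sumr sumrB -mulr_sumr. Qed.

Lemma comb2 (I : finType) (A B C D E : I -> R) c e f g :
  \sum_i A i - \sum_i B i + c * (e * \sum_i C i + f * \sum_i D i - g * \sum_i E i) =
  \sum_i (A i - B i + c * (e * C i + f * D i - g * E i)).
Proof.
by rewrite big_split /= sumrB -mulr_sumr sumrB big_split /= -!mulr_sumr.
Qed.

Lemma Kt_rec0 n M s : q * s != 1 ->
  Kt n.+1 M 0 s = Kt n M 0 s - Kt n M 0 (q * s) +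
    (1 - q) * s / (1 - q * s) * (Kt n M 0 (q * s) - (q * s) ^+ M * Kt n M 0 1).
Proof.
move=> hy; rewrite Kt_split /Kt comb1; apply: eq_bigr => g _.
rewrite inner_split ?word_of_pos ?word_of_le //= S0 ?word_of_le // expr1n.
by ring.
Qed.

Lemma Kt_recS n M r s : q * s != 1 ->
  Kt n.+1 M r.+2 s = Kt n M r.+2 s - Kt n M r.+2 (q * s) +
    (1 - q) * s / (1 - q * s) * (Kt n M r.+1 (q * s) - (q * s) ^+ M * Kt n M r.+1 1).
Proof.
move=> hy; rewrite Kt_split /Kt comb1; apply: eq_bigr => g _.
rewrite inner_split ?word_of_pos ?word_of_le //=.
rewrite (eq_big_nat _ _ (F2 := fun a => ((1 - q) * q ^+ a * s ^+ a.+1 * 1) * wt r.+1 (word_of g))); last first.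
  by move=> a _; rewrite mulr1.
rewrite -mulr_suml S0 ?word_of_le // expr1n.
by rewrite /=; ring.
Qed.

Lemma Kt_rec1 n M s : q * s != 1 ->
  Kt n.+1 M 1 s = Kt n M 1 s - Kt n M 1 (q * s) +
    (1 - q) * s * (((1 - q * s) ^+ 2)^-1 * Kt n M 0 (q * s) +
                   (1 - q * s)^-1 * Kt n M 1 (q * s) - Tf (q * s) M * Kt n M 0 1).
Proof.
move=> hy; rewrite Kt_split /Kt comb2; apply: eq_bigr => g _.
rewrite inner_split ?word_of_pos ?word_of_le //= S1 ?word_of_le // expr1n.
rewrite Vr1_mx ?word_of_pos // /Tf.
by ring.
Qed.
End Rec.
Section Lim.
Variable (R : realType) (q : R).
Hypothesis (q0 : 0 < q) (q1 : q < 1).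

Definition B n (c : nat -> R) : R := \sum_(k < n.+1) 'C(n, k)%:R * (-1) ^+ k * c k.

Lemma B_ext n a b : (forall k, a k = b k) -> B n a = B n b.
Proof. by move=> h; apply: eq_bigr => k _; rewrite h. Qed.

Lemma BB n a b : B n (fun k => a k - b k) = B n a - B n b.
Proof. by rewrite /B -sumrB; apply: eq_bigr => k _; rewrite mulrBr. Qed.

Lemma BZ n x a : B n (fun k => x * a k) = x * B n a.
Proof. by rewrite /B mulr_sumr; apply: eq_bigr => k _; rewrite mulrCA. Qed.

Lemma BS n c : B n.+1 c = B n c - B n (fun k => c k.+1).
Proof.
rewrite /B big_ord_recl /=.
under eq_bigr do rewrite binS natrD !mulrDl.
rewrite big_split /= addrA.
congr (_ + _); last first.
  rewrite -sumrN; apply: eq_bigr => i _.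
  by rewrite /bump /= add1n exprS; ring.
rewrite [in RHS]big_ord_recl /= big_ord_recr /= (bin_small (ltnSn n)) !bin0 mul0r mul0r addr0.
by congr (_ + _); apply: eq_bigr => i _; rewrite /bump leq0n add1n.
Qed.

Lemma den_ne0 k (s : R) : (0 < k)%N -> 0 <= s <= 1 -> 1 - q ^+ k * s != 0.
Proof.
move=> k0 /andP[s0 s1]; rewrite subr_eq0 eq_sym lt_eqF //.
have hk : q ^+ k < 1 by rewrite exprn_ilt1 // ?ltW // -lt0n.
by apply: (le_lt_trans _ hk); rewrite ler_piMr // exprn_ge0 // ltW.
Qed.

Lemma qs_range (s : R) : 0 <= s <= 1 -> 0 <= q * s <= 1.
Proof.
move=> /andP[s0 s1]; apply/andP; split; first by rewrite mulr_ge0 // ltW.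
have h1 : q * s <= q by rewrite -{2}(mulr1 q) ler_pM2l.
exact: (le_trans h1 (ltW q1)).
Qed.

Definition ka0 k s : R := if k is 0 then 1 else (1 - s) / (1 - q ^+ k * s).
Definition ka1 k s : R := (q ^+ k - 1) * s / (1 - q ^+ k * s) ^+ 2.
Fixpoint kapS (prev : nat -> R -> R) k s : R :=
  if k is k'.+1 then kapS prev k' (q * s) - (1 - q) * s / (1 - q * s) * prev k' (q * s)
  else 0.
Fixpoint kap r : nat -> R -> R :=
  match r with 0 => ka0 | 1 => ka1 | r1.+1 => kapS (kap r1) end.

Lemma exprSqs k (s : R) : q ^+ k.+1 * s = q ^+ k * (q * s).
Proof. by rewrite exprSr mulrA. Qed.

Lemma den1 (s : R) : 0 <= s <= 1 -> 1 - q * s != 0.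
Proof. by move=> hs; have := den_ne0 (ltn0Sn 0) hs; rewrite expr1. Qed.

Lemma kap0_rec k (s : R) : 0 <= s <= 1 ->
  ka0 k.+1 s = (1 - s) / (1 - q * s) * ka0 k (q * s).
Proof.
move=> hs; have h1 := den1 hs.
case: k => [|k] /=; first by rewrite expr1 mulr1.
have h2 := den_ne0 (ltn0Sn k) (qs_range hs).
rewrite exprSqs.
by field; rewrite h1 h2.
Qed.

Lemma kap1_rec k (s : R) : 0 <= s <= 1 ->
  ka1 k.+1 s = ka1 k (q * s) * ((1 - s) / (1 - q * s)) -
               (1 - q) * s / (1 - q * s) ^+ 2 * ka0 k (q * s).
Proof.
move=> hs; have h1 := den1 hs.
case: k => [|k] /=.
  rewrite /ka1 !expr0 !expr1 subrr !mul0r mulr1 sub0r.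
  by field; rewrite h1.
have h2 := den_ne0 (ltn0Sn k) (qs_range hs).
rewrite /ka1 exprSqs exprS.
by field; rewrite h1 h2.
Qed.

End Lim.
Local Open Scope classical_set_scope.
Local Open Scope ring_scope.
Section Lim2.
Variable (R : realType).

Lemma cvgc (c : R) : (fun n : nat => c) @ \oo --> (c : R^o).
Proof. apply/cvgrPdist_lt => e e0; apply: nearW => n; by rewrite subrr normr0. Qed.

Lemma pow_mono (a b : R) n : 0 <= a -> a <= b -> a ^+ n <= b ^+ n.
Proof.
move=> a0 ab; elim: n => [|n IH]; first by rewrite !expr0.
by rewrite !exprS ler_pM // exprn_ge0.
Qed.

Lemma cvg_pow (y : R) : 0 <= y < 1 -> (fun M : nat => y ^+ M) @ \oo --> (0 : R^o).
Proof.
move=> /andP[y0 y1]; apply: cvg_expr; by rewrite ger0_norm.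
Qed.

Lemma bern_bound (z : R) n : 0 <= z < 1 -> n.+1%:R * (1 - z) * z ^+ n <= 1.
Proof.
move=> /andP[z0 z1].
have t0 : 0 <= 1 - z by rewrite subr_ge0 ltW.
suff : n.+1%:R * (1 - z) * z ^+ n <= (z + (1 - z)) ^+ n.+1 by rewrite [z + _]addrC subrK expr1n.
rewrite exprDn (bigD1 (inord 1)) ?inordK // subn1 expr1 bin1 /=.
have -> : n.+1%:R * (1 - z) * z ^+ n = z ^+ n * (1 - z) *+ n.+1.
  by rewrite -mulr_natl; ring.
rewrite lerDl sumr_ge0 // => i _.
by rewrite mulrn_wge0 // mulr_ge0 // exprn_ge0.
Qed.

Lemma cvg_npow (y : R) : 0 <= y < 1 -> (fun M : nat => M%:R * y ^+ M) @ \oo --> (0 : R^o).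
Proof.
move=> /andP[y0 y1].
pose z := (1 + y) / 2; pose t := 1 - z.
have z0 : 0 <= z by rewrite /z divr_ge0 // addr_ge0.
have z1 : z < 1 by rewrite /z ltr_pdivrMr // mul1r; lra.
have t0 : 0 < t by rewrite /t subr_gt0.
have yz : y <= z ^+ 2 by rewrite /z; nra.
apply: (@squeeze_cvgr _ \oo _ _ (fun _ : nat => (0:R)) (fun n : nat => t^-2 * harmonic n) (fun M : nat => M%:R * y ^+ M)); last 2 first.
- by apply/cvgrPdist_lt => e e0; apply: nearW => n; rewrite subrr normr0.
- by rewrite -(mulr0 (t^-2)); apply: cvgMl_tmp; exact: cvg_harmonic.
apply: nearW => n /=.
apply/andP; split; first by rewrite mulr_ge0 // exprn_ge0.
have hb := bern_bound n (ltac:(by rewrite z0 z1) : 0 <= z < 1).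
rewrite -/t in hb.
set u := z ^+ n in hb.
have u0 : 0 <= u by rewrite exprn_ge0.
have N0 : 0 <= n%:R :> R by [].
have h1 : n%:R * y ^+ n <= n%:R * u ^+ 2.
  rewrite ler_wpM2l // /u -exprM mulnC exprM.
  exact: pow_mono.
apply: (le_trans h1).
have tn : t != 0 by rewrite gt_eqF.
have Nn : n.+1%:R != 0 :> R by rewrite pnatr_eq0.
have pos : 0 < t ^+ 2 * n.+1%:R by rewrite mulr_gt0 ?exprn_gt0.
have -> : t ^- 2 / n.+1%:R = 1 / (t ^+ 2 * n.+1%:R).
  by field; rewrite tn andbT addrC natr1 pnatr_eq0.
rewrite ler_pdivlMr //.
set a := n.+1%:R * t * u in hb.
have a0 : 0 <= a by rewrite /a mulr_ge0 // mulr_ge0 // ltW.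
have ha2 : a ^+ 2 <= 1 by nra.
apply: le_trans ha2.
rewrite /a -natr1.
have uu : 0 <= u ^+ 2 * t ^+ 2 by rewrite mulr_ge0 // exprn_ge0 // ltW.
nra.
Qed.

Lemma cvg_Tf (y : R) : 0 <= y < 1 -> (fun M : nat => Tf y M) @ \oo --> (0 : R^o).
Proof.
move=> hy; rewrite /Tf.
have -> : (0 : R^o) = 0 / (1 - y) ^+ 2 + 0 / (1 - y) by rewrite !mul0r addr0.
apply: cvgD.
  by apply: cvgMr_tmp; exact: (cvg_pow hy).
by apply: cvgMr_tmp; exact: (cvg_npow hy).
Qed.
Lemma s1_range : 0 <= (1 : R) <= 1.
Proof. by rewrite ler01 lexx. Qed.
End Lim2.
Section Lim3.
Variable (R : realType) (q : R).
Hypothesis (q0 : 0 < q) (q1 : q < 1).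

Lemma Kt_lim n : forall r (s : R), 0 <= s <= 1 ->
  (fun M => Kt q n M r s) @ \oo --> (B n (fun k => kap q r k s) : R^o).
Proof.
elim: n => [|n IH] r s hs.
  have -> : (fun M => Kt q 0 M r s) = (fun _ => B 0 (fun k => kap q r k s)).
    apply: funext => M.
    rewrite /Kt sum_ffun0 word_of0 /word_prob big_ord0 mul1r /B big_ord_recl big_ord0 addr0 /=.
    rewrite bin0 expr0 !mulr1 mul1r /mx big_nil expr0 mulr1.
    case: r => [|[|r]] //=.
    by rewrite /ka1 expr0 subrr !mul0r.
  exact: cvgc.
have hqs := qs_range q0 q1 hs.
have hd := den1 q0 q1 hs.
have hy : q * s != 1 by rewrite eq_sym -subr_eq0.
have hy01 : 0 <= q * s < 1.
  by case/andP: (hqs) => -> hq1 /=; rewrite lt_neqAle hy hq1.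
have h1 := s1_range R.
case: r => [|[|r]].
- have -> : (fun M => Kt q n.+1 M 0 s) = (fun M => Kt q n M 0 s - Kt q n M 0 (q * s) +
    (1 - q) * s / (1 - q * s) * (Kt q n M 0 (q * s) - (q * s) ^+ M * Kt q n M 0 1)).
    by apply: funext => M; rewrite Kt_rec0.
  have -> : B n.+1 (fun k => kap q 0 k s) =
     B n (fun k => kap q 0 k s) - B n (fun k => kap q 0 k (q * s)) +
     (1 - q) * s / (1 - q * s) * (B n (fun k => kap q 0 k (q * s)) - 0 * B n (fun k => kap q 0 k 1)).
    rewrite BS /=.
    rewrite (@B_ext _ n _ _ (fun k => kap0_rec q0 q1 k hs)).
    rewrite BZ mul0r subr0.
    by field.
  apply: cvgD; first by apply: cvgB; [exact: IH | exact: IH].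
  apply: cvgMl_tmp; apply: cvgB; first exact: IH.
  by apply: cvgM; [exact: cvg_pow | exact: IH].
- have -> : (fun M => Kt q n.+1 M 1 s) = (fun M => Kt q n M 1 s - Kt q n M 1 (q * s) +
    (1 - q) * s * (((1 - q * s) ^+ 2)^-1 * Kt q n M 0 (q * s) +
                   (1 - q * s)^-1 * Kt q n M 1 (q * s) - Tf (q * s) M * Kt q n M 0 1)).
    by apply: funext => M; rewrite Kt_rec1.
  have -> : B n.+1 (fun k => kap q 1 k s) =
     B n (fun k => kap q 1 k s) - B n (fun k => kap q 1 k (q * s)) +
     (1 - q) * s * (((1 - q * s) ^+ 2)^-1 * B n (fun k => kap q 0 k (q * s)) +
                   (1 - q * s)^-1 * B n (fun k => kap q 1 k (q * s)) -
                   0 * B n (fun k => kap q 0 k 1)).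
    rewrite BS /= (@B_ext _ n _ _ (fun k => kap1_rec q0 q1 k hs)) BB.
    rewrite (@B_ext _ n (fun k => ka1 q k (q * s) * ((1 - s) / (1 - q * s)))
                        (fun k => ((1 - s) / (1 - q * s)) * ka1 q k (q * s))); last first.
      by move=> k; rewrite mulrC.
    rewrite !BZ mul0r subr0.
    by field.
  apply: cvgD; first by apply: cvgB; [exact: IH | exact: IH].
  apply: cvgMl_tmp; apply: cvgB.
    by apply: cvgD; apply: cvgMl_tmp; exact: IH.
  by apply: cvgM; [exact: cvg_Tf | exact: IH].
- have -> : (fun M => Kt q n.+1 M r.+2 s) = (fun M => Kt q n M r.+2 s - Kt q n M r.+2 (q * s) +
    (1 - q) * s / (1 - q * s) * (Kt q n M r.+1 (q * s) - (q * s) ^+ M * Kt q n M r.+1 1)).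
    by apply: funext => M; rewrite Kt_recS.
  have -> : B n.+1 (fun k => kap q r.+2 k s) =
     B n (fun k => kap q r.+2 k s) - B n (fun k => kap q r.+2 k (q * s)) +
     (1 - q) * s / (1 - q * s) * (B n (fun k => kap q r.+1 k (q * s)) - 0 * B n (fun k => kap q r.+1 k 1)).
    rewrite BS.
    have kS : forall k, kap q r.+2 k.+1 s =
        kap q r.+2 k (q * s) - (1 - q) * s / (1 - q * s) * kap q r.+1 k (q * s) by [].
    rewrite (@B_ext _ n _ _ kS) BB BZ mul0r subr0.
    by ring.
  apply: cvgD; first by apply: cvgB; [exact: IH | exact: IH].
  apply: cvgMl_tmp; apply: cvgB; first exact: IH.
  by apply: cvgM; [exact: cvg_pow | exact: IH].
Qed.
End Lim3.
Local Close Scope classical_set_scope.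
Section PhiSec.
Variable (R : realType) (q : R).
Hypothesis (q0 : 0 < q) (q1 : q < 1).

Definition Phi r k (s : R) : R :=
  \sum_(S : {set 'I_k} | (#|S| == r.-1)%N && ((0%N : nat) \notin [seq val l | l in S]))
     (\prod_(l in S) (q ^+ (val l) / (1 - q ^+ (val l) * s))) *
     (q ^+ (\max_(l in S) val l) - q ^+ k).

Definition G j k (s : R) : R :=
  \sum_(T : {set 'I_k} | (#|T| == j)%N)
     (\prod_(t in T) (q ^+ (val t).+1 / (1 - q ^+ (val t).+1 * s))) *
     (q ^+ (\max_(t in T) (val t).+1) - q ^+ k.+1).

Lemma in_map0 k (S : {set 'I_k.+1}) :
  ((0%N : nat) \in [seq val l | l in S]) = (ord0 \in S).
Proof.
apply/mapP/idP => [[l]|h]; last by exists ord0; rewrite ?mem_enum.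
rewrite mem_enum => lS /= l0.
by have -> : ord0 = l by apply/val_inj.
Qed.

Definition sadd k (b : bool) (U : {set 'I_k}) : {set 'I_k.+1} :=
  ((if b then [set ord0] else finset.set0) : {set 'I_k.+1}) :|: [set lift ord0 u | u in U].

Lemma lift_notin0 k (u : 'I_k) b :
  (lift ord0 u \in ((if b then [set ord0] else finset.set0) : {set 'I_k.+1})) = false.
Proof. case: b; rewrite ?inE //.
Qed.

Lemma ord0_notin k (U : {set 'I_k}) : (ord0 \in [set lift ord0 u | u in U]) = false.
Proof. by apply/imsetP => -[u _ h]; move: (neq_lift ord0 u); rewrite -h eqxx. Qed.

Lemma sum_setS (V : nmodType) k (F : {set 'I_k.+1} -> V) :
  \sum_(T : {set 'I_k.+1}) F T = \sum_(b : bool) \sum_(U : {set 'I_k}) F (sadd b U).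
Proof.
rewrite pair_big /= (reindex (fun p : bool * {set 'I_k} => sadd p.1 p.2)) //=.
exists (fun T : {set 'I_k.+1} => (ord0 \in T, [set u : 'I_k | lift ord0 u \in T])).
  move=> [b U] _ /=; congr pair.
    by rewrite /sadd finset.in_setU ord0_notin orbF; case: b; rewrite ?inE ?eqxx.
  apply/setP => u; rewrite inE /sadd finset.in_setU lift_notin0 /= mem_imset //.
  exact: lift_inj.
move=> T _ /=; apply/setP => t; rewrite /sadd finset.in_setU.
case: (unliftP ord0 t) => [u ->|->].
  by rewrite lift_notin0 /= mem_imset ?inE //; exact: lift_inj.
rewrite ord0_notin orbF.
by case: (boolP (ord0 \in T)) => h; rewrite ?inE ?eqxx ?h.
Qed.

Lemma bigmaxS k (U : {set 'I_k}) (f : 'I_k -> nat) :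
  maxn 1 (\max_(u in U) (f u).+1) = (\max_(u in U) f u).+1.
Proof.
apply: (big_rec2 (fun y1 y2 => maxn 1 y1 = y2.+1)) => // i y1 y2 _ h.
by rewrite maxnCA h maxnSS.
Qed.

Lemma bigmaxS' k (U : {set 'I_k}) (f : 'I_k -> nat) : U != finset.set0 ->
  \max_(u in U) (f u).+1 = (\max_(u in U) f u).+1.
Proof.
case/set0Pn => u uU; rewrite -bigmaxS; apply/esym/maxn_idPr.
by apply: leq_trans (leq_bigmax_cond _ uU).
Qed.

Lemma inj0 k (U : {set 'I_k}) : {in U &, injective (lift (@ord0 k))}.
Proof. by move=> x y _ _; apply: lift_inj. Qed.

Lemma sadd_false k (U : {set 'I_k}) : sadd false U = [set lift ord0 u | u in U].
Proof. by rewrite /sadd finset.set0U. Qed.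

Lemma Phi_G r k s : Phi r k.+1 s = G r.-1 k s.
Proof.
rewrite /Phi /G big_mkcond sum_setS big_bool /=.
rewrite big1 ?add0r; last first.
  by move=> U _; rewrite in_map0 /sadd finset.in_setU inE eqxx /= andbF.
rewrite [RHS]big_mkcond; apply: eq_bigr => U _.
rewrite sadd_false in_map0 ord0_notin andbT card_imset; last exact: lift_inj.
case: (_ == _) => //.
rewrite big_imset /=; last exact: inj0.
rewrite big_imset /=; last exact: inj0.
by congr (_ * (q ^+ _ - _)).
Qed.

Lemma bump0 (i : nat) : bump 0 i = i.+1.
Proof. by rewrite /bump leq0n add1n. Qed.

Lemma wq (u : nat) (s : R) :
  q ^+ u.+2 / (1 - q ^+ u.+2 * s) = q * (q ^+ u.+1 / (1 - q ^+ u.+1 * (q * s))).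
Proof. by rewrite -exprSqs mulrA -exprS. Qed.

Lemma G_rec j k s : (0 < j)%N ->
  G j k.+1 s = q ^+ j.+1 * G j k (q * s) + q ^+ j.+1 / (1 - q * s) * G j.-1 k (q * s).
Proof.
case: j => // j _; rewrite /G big_mkcond sum_setS big_bool /= addrC.
congr (_ + _).
  rewrite [in RHS]big_mkcond mulr_sumr; apply: eq_bigr => U _.
  rewrite sadd_false card_imset; last exact: lift_inj.
  case: eqP => hU; last by rewrite mulr0.
  rewrite big_imset /=; last exact: inj0.
  rewrite big_imset /=; last exact: inj0.
  under eq_bigr do rewrite bump0 wq.
  under [\max_(_ in _) _]eq_bigr do rewrite bump0.
  rewrite big_split /= prodr_const hU bigmaxS'; last first.
    by apply/eqP => U0; move: hU; rewrite U0 cards0.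
  rewrite !exprS.
  by ring.
rewrite [in RHS]big_mkcond mulr_sumr; apply: eq_bigr => U _.
rewrite /sadd /= cardsU1 ord0_notin /= add1n eqSS card_imset; last exact: lift_inj.
case: eqP => hU; last by rewrite mulr0.
rewrite big_setU1 ?ord0_notin //= big_setU1 ?ord0_notin //=.
rewrite big_imset /=; last exact: inj0.
rewrite big_imset /=; last exact: inj0.
under eq_bigr do rewrite bump0 wq.
under [\max_(_ in _) _]eq_bigr do rewrite bump0.
rewrite big_split /= prodr_const hU bigmaxS !exprS expr0 !mulr1.
by ring.
Qed.

Lemma max0 (S : {set 'I_0}) (f : 'I_0 -> nat) : \max_(l in S) f l = 0%N.
Proof. by apply/eqP; rewrite -leqn0; apply/bigmax_leqP => -[]. Qed.

Lemma Phi_0 r s : Phi r 0 s = 0.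
Proof. by rewrite /Phi big1 // => S _; rewrite max0 expr0 subrr mulr0. Qed.

Lemma G_0 k s : G 0 k s = 1 - q ^+ k.+1.
Proof.
rewrite /G (big_pred1 finset.set0); last by move=> T; rewrite /= cards_eq0.
by rewrite !finset.big_set0 expr0 mul1r.
Qed.

Lemma G_j0 j s : (0 < j)%N -> G j 0 s = 0.
Proof.
move=> j0; rewrite /G big_pred0 // => T /=.
have := max_card T; rewrite card_ord leqn0 => /eqP ->.
by case: j j0.
Qed.

Lemma Phi_1 k s : Phi 1 k s = 1 - q ^+ k.
Proof. by case: k => [|k]; rewrite ?Phi_0 ?expr0 ?subrr // Phi_G G_0. Qed.

Lemma Phi_rec r k s :
  Phi r.+2 k.+1 s = q ^+ r.+2 * Phi r.+2 k (q * s) + q ^+ r.+2 / (1 - q * s) * Phi r.+1 k (q * s).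
Proof.
case: k => [|k].
  by rewrite !Phi_0 Phi_G G_j0 // !mulr0 addr0.
by rewrite !Phi_G /= G_rec.
Qed.

Lemma kapSS r k s :
  kap q r.+2 k.+1 s = kap q r.+2 k (q * s) - (1 - q) * s / (1 - q * s) * kap q r.+1 k (q * s).
Proof. by []. Qed.

Lemma kap_small r : forall k s, (0 < r)%N -> (k < r)%N -> kap q r k s = 0.
Proof.
elim: r => [//|r IHr] k s _ hk.
case: r IHr hk => [|r] IHr hk.
  by case: k hk => // _; rewrite /= /ka1 expr0 subrr !mul0r.
elim: k s hk => [|k IHk] s hk //.
by rewrite kapSS IHk ?(ltnW hk) // IHr // mulr0 subr0.
Qed.

Lemma den_qs k (s : R) : 0 <= s <= 1 -> 1 - q ^+ k * (q * s) != 0.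
Proof. by move=> hs; rewrite -exprSqs den_ne0. Qed.

Lemma kap_closed r : forall k (s : R), (0 < r)%N -> 0 <= s <= 1 ->
  kap q r k s = (-1) ^+ r * ((1 - q) / q) ^+ r.-1 * s ^+ r / (1 - q ^+ k * s) ^+ 2 * Phi r k s.
Proof.
elim: r => [//|r IHr] k s _ hs.
case: r IHr => [|r] IHr.
  rewrite /= /ka1 Phi_1.
  case: k => [|k]; first by rewrite expr0 subrr !mul0r mulr0.
  have hd := den_ne0 q0 q1 (ltn0Sn k) hs.
  set d := 1 - q ^+ k.+1 * s in hd *.
  by rewrite expr1 expr0; field.
elim: k s hs => [|k IHk] s hs.
  by rewrite Phi_0 mulr0.
have hqs := qs_range q0 q1 hs.
rewrite kapSS IHk // IHr // Phi_rec exprSqs.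
have hd1 := den_qs k hs.
have hd2 := den1 q0 q1 hs.
have hq : q != 0 by rewrite gt_eqF.
set d1 := 1 - q ^+ k * (q * s) in hd1 *.
set d2 := 1 - q * s in hd2 *.
rewrite /= !exprS !exprMn.
by field; rewrite hd1 hd2 hq.
Qed.
Lemma Phi_phi r k : Phi r k 1 = phi q r k.
Proof.
rewrite /Phi /phi; apply: eq_bigr => S _; congr (_ * _); apply: eq_bigr => l _.
rewrite mulr1; case: (eqVneq (val l) 0%N) => [->|hl]; first by rewrite !expr0 subrr.
have l0 : (0 < val l)%N by rewrite lt0n.
have h1 := den_ne0 q0 q1 l0 (s1_range R); rewrite mulr1 in h1.
have hq : q ^+ l != 0 by rewrite expf_neq0 // gt_eqF.
rewrite exprVn.
set x := q ^+ l in h1 hq *.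
by field; rewrite hq mulN1r h1.
Qed.
End PhiSec.
Local Open Scope classical_set_scope.
Local Open Scope ring_scope.

Theorem mainTheorem2 (R : realType) (q : R) (r n : nat) :
  0 < q -> q < 1 -> (1 <= r)%N -> (r <= n)%N ->
  (fun M => Etrunc q r n M) @ \oo -->
     ((-1) ^+ r * ((1 - q) / q) ^+ r.-1 *
      \sum_(r <= k < n.+1)
        ('C(n, k)%:R * (-1) ^+ k * phi q r k / (1 - q ^+ k) ^+ 2))
  /\
  (fun M => Etrunc q 1 n M) @ \oo -->
     (\sum_(1 <= k < n.+1) ('C(n, k)%:R * (-1) ^+ k.-1 / (1 - q ^+ k))).
Proof.
move=> q0 q1 r1 rn.
have hE : forall r0, (0 < r0)%N -> (fun M => Etrunc q r0 n M) = (fun M => Kt q n M r0 1).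
  move=> r0 r00; apply: funext => M; rewrite /Etrunc /Kt; apply: eq_bigr => f _.
  by rewrite expr1n mulr1; case: r0 r00.
have hs := s1_range R.
split.
  rewrite hE //.
  suff E : B n (fun k => kap q r k 1) =
     (-1) ^+ r * ((1 - q) / q) ^+ r.-1 *
      \sum_(r <= k < n.+1)
        ('C(n, k)%:R * (-1) ^+ k * phi q r k / (1 - q ^+ k) ^+ 2).
    rewrite -E; have L := @Kt_lim R q q0 q1 n r 1 hs.
    exact: L.
  rewrite /B -(big_mkord (fun _ => true) (fun k => 'C(n, k)%:R * (-1) ^+ k * kap q r k 1)).
  rewrite (big_cat_nat (leq0n r) (leqW rn)) /=.
  rewrite big_nat_cond big1 ?add0r; last first.
    by move=> k /andP[/andP[_ hk] _]; rewrite kap_small // mulr0.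
  rewrite mulr_sumr; apply: eq_big_nat => k /andP[hk _].
  rewrite kap_closed // (Phi_phi q0 q1).
  have -> : (1 : R) ^+ r = 1 by rewrite expr1n.
  rewrite !mulr1.
  by ring.
rewrite hE //.
suff E : B n (fun k => kap q 1 k 1) =
     \sum_(1 <= k < n.+1) ('C(n, k)%:R * (-1) ^+ k.-1 / (1 - q ^+ k)).
  by rewrite -E; exact: (@Kt_lim R q q0 q1 n 1 1 hs).
rewrite /B big_ord_recl /= /ka1 expr0 subrr !mul0r mulr0 add0r.
rewrite big_add1 /= big_mkord.
apply: eq_bigr => i _; rewrite bump0.
have h1 := den_ne0 q0 q1 (ltn0Sn i) hs; rewrite mulr1 in h1.
rewrite !mulr1 [(-1) ^+ i.+1]exprS.
set x := q ^+ i.+1 in h1 *.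
by field.
Qed.
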